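(* Let $\mathscr{F}$ be a family of languages closed under product, union, Kleene closure and (left and right) division by finite [respectively, regular] languages. Let $S$ be a semigroup, let $\sigma : X^+ \to S$ be a choice of generators for $S$, and suppose that $L_\sigma(S) \in \mathscr{F}$. If $T$ is a finite [respectively, rational] ideal of $S$, then $L_{\sigma/T}(S/T) \in \mathscr{F}$.
   Context: For a semigroup $S$, $S^1$ denotes the monoid obtained by adjoining a new identity $1$ (even if $S$ already has one). A choice of generators for $S$ is a surjective morphism $\sigma : X^+ \to S$ from a free semigroup; it extends uniquely to $\sigma^1 : X^* \to S^1$. Let $\overline{X} = \{\overline{x} : x \in X\}$ be a set of formal inverses, $\hat{X} = X \cup \overline{X}$, with the involution $\overline{\overline{x}} = x$ and $\overline{x_1\cdots x_n} = \overline{x_n}\cdots\overline{x_1}$. The loop automaton of $S$ with respect to $\sigma$ is the directed labelled graph with vertex set $S^1$, having for each $a \in S^1$ and $x \in X$ an edge from $a$ to $a(x\sigma)$ labelled $x$ and an edge from $a(x\sigma)$ to $a$ labelled $\overline{x}$. The loop problem $L_\sigma(S) \subseteq \hat{X}^*$ is the set of words labelling paths from $1$ to $1$ in this graph (including the empty word). An ideal of $S$ is a subsemigroup $T$ with $S T \cup T S \subseteq T$. The Rees quotient $S/T$ has elements $(S\setminus T) \cup \{0\}$, with product equal to the $S$-product when that product lies outside $T$ and both factors are nonzero, and $0$ otherwise. The map $S \to S/T$ sending $s \notin T$ to $s$ and $s \in T$ to $0$ is a surjective morphism; composing $\sigma$ with it gives a choice of generators $\sigma/T : X^+ \to S/T$.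 A subset of $S$ is rational if it is the image of a regular language under a morphism from a finitely generated free monoid to $S$; a rational ideal is a rational subset which is an ideal. For languages $L, K$, division means $L K^{-1} = \{w : wk \in L \text{ for some } k \in K\}$ and $K^{-1}L = \{w : kw \in L \text{ for some } k \in K\}$. *)

(* Defs.v *)
From Stdlib Require Import ClassicalEpsilon.
From Stdlib Require List.
From mathcomp Require Import all_boot.

Set Implicit Arguments.
Unset Strict Implicit.
Unset Printing Implicit Defensive.

Definition lang (A : Type) := seq A -> Prop.

Section Languages.
Variable A : Type.

Definition lang_cat (L1 L2 : lang A) : lang A :=
  fun w => exists u v, w = u ++ v /\ L1 u /\ L2 v.

Definition lang_union (L1 L2 : lang A) : lang A := fun w => L1 w \/ L2 w.

Inductive lang_star (L : lang A) : lang A :=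
| star_nil : lang_star L [::]
| star_cons u v : L u -> lang_star L v -> lang_star L (u ++ v).

Definition lang_rdiv (L K : lang A) : lang A := fun w => exists k, K k /\ L (w ++ k).
Definition lang_ldiv (K L : lang A) : lang A := fun w => exists k, K k /\ L (k ++ w).

Definition finite_lang (K : lang A) : Prop :=
  exists s : seq (seq A), forall w, K w <-> List.In w s.

Inductive regex : Type :=
| Rempty | Reps | Rchar of A | Rplus of regex & regex
| Rcat of regex & regex | Rstar of regex.

Fixpoint regex_lang (r : regex) : lang A :=
  match r with
  | Rempty => fun _ => False
  | Reps => fun w => w = [::]
  | Rchar a => fun w => w = [:: a]
  | Rplus r1 r2 => lang_union (regex_lang r1) (regex_lang r2)
  | Rcat r1 r2 => lang_cat (regex_lang r1) (regex_lang r2)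
  | Rstar r1 => lang_star (regex_lang r1)
  end.

Definition regular (K : lang A) : Prop := exists r, forall w, K w <-> regex_lang r w.
End Languages.

Definition lang_family := forall A : finType, lang A -> Prop.

Definition closed_rat_ops (F : lang_family) : Prop :=
  forall A : finType,
    (forall L1 L2, F A L1 -> F A L2 -> F A (lang_cat L1 L2)) /\
    (forall L1 L2, F A L1 -> F A L2 -> F A (lang_union L1 L2)) /\
    (forall L, F A L -> F A (lang_star L)).

Definition closed_div (P : forall A : finType, lang A -> Prop) (F : lang_family) : Prop :=
  forall (A : finType) (K L : lang A), P A K -> F A L ->
    F A (lang_rdiv L K) /\ F A (lang_ldiv K L).

Section Semigroup.
Variables (S : Type) (mul : S -> S -> S).

(* value of the nonempty word x w under the morphism X^+ -> S determined by g *)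
Definition eval_word (X : Type) (g : X -> S) (x : X) (w : seq X) : S :=
  foldl (fun s y => mul s (g y)) (g x) w.

(* g : X -> S determines a choice of generators sigma : X^+ -> S (surjective) *)
Definition is_generating (X : Type) (g : X -> S) : Prop :=
  forall s, exists x w, eval_word g x w = s.

(* S^1 = option S, with None the adjoined identity; right multiplication by s in S *)
Definition one_mul (a : option S) (s : S) : option S :=
  match a with None => Some s | Some b => Some (mul b s) end.

(* hat X = X + X : inl x is x, inr x is the formal inverse xbar *)
Definition loop_edge (X : Type) (g : X -> S) (a : option S) (y : X + X) (b : option S) : Prop :=
  match y with
  | inl x => b = one_mul a (g x)
  | inr x => a = one_mul b (g x)
  end.

Fixpoint loop_path (X : Type) (g : X -> S) (a : option S) (w : seq (X + X)) (b : option S)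
  : Prop :=
  match w with
  | [::] => a = b
  | y :: w' => exists c, loop_edge g a y c /\ loop_path g c w' b
  end.

Definition loop_problem (X : Type) (g : X -> S) : lang (X + X) :=
  fun w => loop_path g None w None.

Definition is_ideal (T : S -> Prop) : Prop :=
  (exists t, T t) /\ (forall s t, T t -> T (mul s t) /\ T (mul t s)).

Definition finite_subset (T : S -> Prop) : Prop :=
  exists l : seq S, forall s, T s <-> List.In s l.

Definition rational_subset (R : S -> Prop) : Prop :=
  exists (Y : finType) (f : Y -> S) (K : lang Y),
    regular K /\ forall s, R s <-> exists y w, K (y :: w) /\ eval_word f y w = s.

(** Rees quotient S/T : None is 0, Some s with s \notin T *)
Definition rees (T : S -> Prop) := option {s : S | ~ T s}.

Definition rees_proj (T : S -> Prop) (s : S) : rees T :=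
  match excluded_middle_informative (T s) with
  | left _ => None
  | right h => Some (exist _ s h)
  end.

Definition rees_mul (T : S -> Prop) (a b : rees T) : rees T :=
  match a, b with
  | Some a', Some b' => rees_proj T (mul (proj1_sig a') (proj1_sig b'))
  | _, _ => None
  end.

Definition rees_gen (T : S -> Prop) (X : Type) (g : X -> S) : X -> rees T :=
  fun x => rees_proj T (g x).
End Semigroup.

(* Main.v *)
Require Import Defs.
From mathcomp Require Import all_boot.
From Stdlib Require Import ProofIrrelevance ClassicalEpsilon FunctionalExtensionality PropExtensionality.
Set Implicit Arguments.
Unset Strict Implicit.
Unset Printing Implicit Defensive.

Section Regex.
Variables A B : Type.

Lemma star_app (L : lang A) u v : lang_star L u -> lang_star L v -> lang_star L (u ++ v).
Proof.
elim=> [//|u1 v1 Hu1 Hv1 IH] Hv; rewrite -catA; apply: star_cons => //; exact: IH.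
Qed.

Lemma star_mono (L1 L2 : lang A) w : (forall u, L1 u -> L2 u) -> lang_star L1 w -> lang_star L2 w.
Proof. move=> H; elim=> [|u v Hu _ IH]; [exact: star_nil | exact: star_cons (H _ Hu) IH]. Qed.

Fixpoint nullable (r : regex A) : bool :=
  match r with
  | Rempty => false | Reps => true | Rchar _ => false
  | Rplus r1 r2 => nullable r1 || nullable r2
  | Rcat r1 r2 => nullable r1 && nullable r2
  | Rstar _ => true end.

Lemma nullableP r : nullable r <-> regex_lang r [::].
Proof.
elim: r => [||a|r1 IH1 r2 IH2|r1 IH1 r2 IH2|r IH] /=; try by split.
- rewrite /lang_union; split.
  + by case/orP => [/IH1|/IH2]; auto.
  + by case=> [/IH1|/IH2] ->; rewrite ?orbT.
- rewrite /lang_cat; split.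
  + by case/andP => /IH1 h1 /IH2 h2; exists [::], [::].
  + by case=> [[|a u] [[|b v] [//= _ [/IH1 -> /IH2 ->]]]].
- by split => _; [exact: star_nil|].
Qed.

Fixpoint rne (r : regex A) : regex A :=
  match r with
  | Rempty => Rempty _ | Reps => Rempty _ | Rchar a => Rchar a
  | Rplus r1 r2 => Rplus (rne r1) (rne r2)
  | Rcat r1 r2 => Rplus (Rcat (rne r1) r2) (if nullable r1 then rne r2 else Rempty _)
  | Rstar r => Rcat (rne r) (Rstar r) end.

Lemma rneP r w : regex_lang (rne r) w <-> regex_lang r w /\ w <> [::].
Proof.
elim: r w => [||a|r1 IH1 r2 IH2|r1 IH1 r2 IH2|r IH] w /=.
- by split => [[]|[]].
- by split => [[]|[->]].
- by split => [->|[]].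
- rewrite /lang_union IH1 IH2; tauto.
- rewrite /lang_union /lang_cat; split.
  + case=> [[u [v [-> [/IH1 [h1 hu] h2]]]]|].
    * split; first by exists u, v.
      by case: u hu {h1} => //.
    * case E: (nullable r1) => //= /IH2 [h2 hw]; split => //.
      by exists [::], w; split => //; split => //; apply/nullableP.
  + case=> [[u [v [-> [h1 h2]]]] hw].
    case: u h1 hw => [|a u] h1 hw.
    * right; have -> : nullable r1 by apply/nullableP.
      by apply/IH2.
    * left; exists (a :: u), v; split => //; split => //; exact/IH1.
- rewrite /lang_cat; split.
  + case=> [u [v [-> [/IH [hu nu] hv]]]]; split; first exact: star_cons.
    by case: u nu {hu}.
  + case=> H; elim: H => [//|u v hu hv IHv] nw.
    case: u hu nw => [|a u] hu nw.
    * exact: IHv.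
    * by exists (a :: u), v; split => //; split => //; apply/IH.
Qed.

Lemma regular_ne (K : lang A) : regular K -> regular (fun w => K w /\ w <> [::]).
Proof. case=> r Hr; exists (rne r) => w; rewrite rneP Hr; tauto. Qed.

Definition word_regex (s : seq B) : regex B := foldr (fun b r => Rcat (Rchar b) r) (Reps _) s.

Lemma word_regexP s w : regex_lang (word_regex s) w <-> w = s.
Proof.
elim: s w => [|b s IH] w /=; first by [].
rewrite /lang_cat; split.
- by case=> [u [v [-> [-> /IH ->]]]].
- by move=> ->; exists [:: b], s; split => //; split => //; apply/IH.
Qed.

Fixpoint rsubst (h : A -> seq B) (r : regex A) : regex B :=
  match r with
  | Rempty => Rempty _ | Reps => Reps _ | Rchar a => word_regex (h a)
  | Rplus r1 r2 => Rplus (rsubst h r1) (rsubst h r2)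
  | Rcat r1 r2 => Rcat (rsubst h r1) (rsubst h r2)
  | Rstar r => Rstar (rsubst h r) end.

Lemma rsubstP h r w :
  regex_lang (rsubst h r) w <-> exists u, regex_lang r u /\ w = flatten (map h u).
Proof.
elim: r w => [||a|r1 IH1 r2 IH2|r1 IH1 r2 IH2|r IH] w /=.
- by split => [[]|[u [[] _]]].
- by split => [->|[u [-> ->]]]; first by exists [::].
- rewrite word_regexP; split => [->|[u [-> ->]]]; last by rewrite /= cats0.
  by exists [:: a]; rewrite /= cats0.
- rewrite /lang_union IH1 IH2; split.
  + by case=> [[u [hu ->]]|[u [hu ->]]]; exists u; auto.
  + by case=> [u [[hu|hu] ->]]; [left|right]; exists u.
- rewrite /lang_cat; split.
  + case=> [w1 [w2 [-> [/IH1 [u1 [h1 ->]] /IH2 [u2 [h2 ->]]]]]].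
    exists (u1 ++ u2); split; first by exists u1, u2.
    by rewrite map_cat flatten_cat.
  + case=> [u [[u1 [u2 [-> [h1 h2]]]] ->]].
    exists (flatten (map h u1)), (flatten (map h u2)).
    rewrite map_cat flatten_cat; split => //; split; [apply/IH1|apply/IH2]; eauto.
- split.
  + elim=> [|w1 w2 hw1 _ [u2 [h2 ->]]]; first by exists [::]; split => //; exact: star_nil.
    case/IH: hw1 => u1 [h1 ->]; exists (u1 ++ u2); split; first exact: star_cons.
    by rewrite map_cat flatten_cat.
  + case=> [u [hu ->]]; elim: hu => [|u1 u2 h1 _ IH2]; first exact: star_nil.
    rewrite map_cat flatten_cat; apply: star_cons IH2; apply/IH; eauto.
Qed.

Lemma regular_subst (h : A -> seq B) (K : lang A) :
  regular K -> regular (fun w => exists u, K u /\ w = flatten (map h u)).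
Proof.
case=> r Hr; exists (rsubst h r) => w; rewrite rsubstP.
by split; case=> u [hu ->]; exists u; split => //; apply/Hr.
Qed.

Fixpoint rrev (r : regex A) : regex A :=
  match r with
  | Rplus r1 r2 => Rplus (rrev r1) (rrev r2)
  | Rcat r1 r2 => Rcat (rrev r2) (rrev r1)
  | Rstar r => Rstar (rrev r)
  | r => r end.

Lemma rrevP r w : regex_lang (rrev r) w <-> regex_lang r (rev w).
Proof.
elim: r w => [||a|r1 IH1 r2 IH2|r1 IH1 r2 IH2|r IH] w /=.
- by [].
- by split => [->|]; [|case: w => //= a w; rewrite rev_cons; case: (rev w)].
- split => [->|h]; first by []. by rewrite -(revK w) h.
- by rewrite /lang_union IH1 IH2.
- rewrite /lang_cat; split.
  + case=> [u [v [-> [/IH2 h2 /IH1 h1]]]]; exists (rev v), (rev u).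
    by rewrite rev_cat.
  + case=> [u [v [e [h1 h2]]]]; exists (rev v), (rev u).
    rewrite -rev_cat -e revK; split => //; split; [apply/IH2|apply/IH1]; by rewrite revK.
- split.
  + elim=> [|u v hu _ IHv]; first exact: star_nil.
    rewrite rev_cat; apply: star_app IHv _.
    rewrite -(cats0 (rev u)); apply: star_cons; [exact/IH| exact: star_nil].
  + have H : forall z, lang_star (regex_lang r) z -> lang_star (regex_lang (rrev r)) (rev z).
      move=> z; elim=> [|u v hu _ IHv]; first exact: star_nil.
      rewrite rev_cat; apply: star_app IHv _.
      rewrite -(cats0 (rev u)); apply: star_cons; [apply/IH; by rewrite revK| exact: star_nil].
    by move=> /H; rewrite revK.
Qed.

Lemma regular_rev (K : lang A) : regular K -> regular (fun w => K (rev w)).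
Proof. by case=> r Hr; exists (rrev r) => w; rewrite rrevP Hr. Qed.

End Regex.

Definition swap_l (X : Type) (y : X + X) : X + X :=
  match y with inl x => inr x | inr x => inl x end.
Definition bar (X : Type) (w : seq (X + X)) := rev (map (@swap_l X) w).

Lemma barK (X : Type) (w : seq (X + X)) : bar (bar w) = w.
Proof.
rewrite /bar map_rev revK -map_comp; elim: w => //= [[x|x] w ->] //.
Qed.

Lemma bar_inl (X : Type) (z : seq X) : bar (map inl z) = rev (map inr z).
Proof. by rewrite /bar; congr rev; elim: z => //= a z ->. Qed.

Section Paths.
Variables (S : Type) (mul : S -> S -> S) (X : Type) (g : X -> S).

Lemma path_cat a u v b :
  loop_path mul g a (u ++ v) b <-> exists c, loop_path mul g a u c /\ loop_path mul g c v b.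
Proof.
elim: u a => [|y u IH] a /=.
- by split => [h|[c [-> h]]]; first by exists a.
- split.
  + by case=> c [e /IH [d [h1 h2]]]; exists d; split => //; exists c.
  + by case=> d [[c [e h1]] h2]; exists c; split => //; apply/IH; exists d.
Qed.

Lemma edge_swap a y b : loop_edge mul g a y b -> loop_edge mul g b (swap_l y) a.
Proof. by case: y. Qed.

Lemma path_bar1 a w b : loop_path mul g a w b -> loop_path mul g b (bar w) a.
Proof.
elim: w a => [|y w IH] a /=; first by move=> ->.
case=> c [e h]; rewrite /bar /= rev_cons -cats1.
apply/path_cat; exists c; split; first exact: IH.
by exists a; split => //; apply: edge_swap.
Qed.

Lemma path_bar a w b : loop_path mul g a w b <-> loop_path mul g b (bar w) a.
Proof. split; first exact: path_bar1. by move/path_bar1; rewrite barK. Qed.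

Lemma path_inl_some s v c :
  loop_path mul g (Some s) (map inl v) c <-> c = Some (foldl (fun s y => mul s (g y)) s v).
Proof.
elim: v s => [|x v IH] s /=; first by split => ->.
split.
  case=> d [e h]. rewrite /= in e. subst d. exact: (proj1 (IH _) h).
move=> e; exists (Some (mul s (g x))); split => //. apply: (proj2 (IH _)). exact e.
Qed.

Lemma path_inl_none x v c :
  loop_path mul g None (map inl (x :: v)) c <-> c = Some (eval_word mul g x v).
Proof.
rewrite /=; split; first by case=> d [-> /path_inl_some].
by move=> ->; exists (Some (g x)); split => //; apply/path_inl_some.
Qed.

Lemma foldl_mul (mulA : associative mul) (Z : Type) (k : Z -> S) a b u :
  foldl (fun s y => mul s (k y)) (mul a b) u = mul a (foldl (fun s y => mul s (k y)) b u).
Proof. by elim: u b => //= z u IH b; rewrite -mulA IH. Qed.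

Lemma eval_cat (mulA : associative mul) x v y u :
  eval_word mul g x (v ++ y :: u) = mul (eval_word mul g x v) (eval_word mul g y u).
Proof. by rewrite /eval_word foldl_cat /= foldl_mul. Qed.

End Paths.

Section Rees.
Variables (S : Type) (mul : S -> S -> S) (X : Type) (g : X -> S) (T : S -> Prop).
Hypothesis idT : is_ideal mul T.

Local Notation mul' := (rees_mul mul (T:=T)).
Local Notation g' := (rees_gen T g).
Local Notation L := (loop_problem mul g).

Definition pi (a : option S) : option (rees T) :=
  match a with None => None | Some s => Some (rees_proj T s) end.

Lemma rees_proj_None s : rees_proj T s = None <-> T s.
Proof. rewrite /rees_proj; case: excluded_middle_informative => //. Qed.

Lemma rees_proj_Some s p : rees_proj T s = Some p -> proj1_sig p = s.
Proof. rewrite /rees_proj; case: excluded_middle_informative => // h [<-] //. Qed.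

Lemma rees_proj_val p : rees_proj T (proj1_sig p) = Some p.
Proof.
rewrite /rees_proj; case: excluded_middle_informative => [h|h].
- by case: p h => s hs /= /hs.
- by case: p h => s hs /= h; rewrite (proof_irrelevance _ h hs).
Qed.

Lemma rees_proj_mul a b : rees_proj T (mul a b) = mul' (rees_proj T a) (rees_proj T b).
Proof.
case: idT => _ id2.
case Ea: (rees_proj T a) => [pa|]; last first.
  by apply/rees_proj_None; apply: (proj2 (id2 b a _)); apply/rees_proj_None.
case Eb: (rees_proj T b) => [pb|]; last first.
  by apply/rees_proj_None; apply: (proj1 (id2 a b _)); apply/rees_proj_None.
by rewrite /= (rees_proj_Some Ea) (rees_proj_Some Eb).
Qed.

Lemma pi_one_mul a s : pi (one_mul mul a s) = one_mul mul' (pi a) (rees_proj T s).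
Proof. by case: a => [b|] //=; rewrite rees_proj_mul. Qed.

Lemma edge_pi a y b : loop_edge mul g a y b -> loop_edge mul' g' (pi a) y (pi b).
Proof. by case: y => x /= ->; rewrite pi_one_mul. Qed.

Lemma pi_surj c : exists a, pi a = c.
Proof.
case: c => [[p|]|]; last by exists None.
- by exists (Some (proj1_sig p)); rewrite /= rees_proj_val.
- case: idT => [[t ht] _]; exists (Some t); by rewrite /= (proj2 (rees_proj_None t) ht).
Qed.

Lemma pi_inj a1 a : pi a1 = pi a ->
  a1 = a \/ exists t t1, a = Some t /\ a1 = Some t1 /\ T t /\ T t1.
Proof.
case: a1 a => [s1|] [s|] //=; last by left.
case E: (rees_proj T s) => [p|] [E1].
- by left; rewrite -(rees_proj_Some E) -(rees_proj_Some E1).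
- right; exists s, s1; split => //; split => //; split; exact/rees_proj_None.
Qed.

Inductive jpath : option S -> seq (X + X) -> option S -> Prop :=
| jp_nil a : jpath a [::] a
| jp_edge a y c w b : loop_edge mul g a y c -> jpath c w b -> jpath a (y :: w) b
| jp_jump t t' w b : T t -> T t' -> jpath (Some t') w b -> jpath (Some t) w b.

Lemma jpath_from_pi a1 a w b : pi a1 = pi a -> jpath a1 w b -> jpath a w b.
Proof.
case/pi_inj => [->//|[t [t1 [-> [-> [ht ht1]]]]]] h.
exact: jp_jump h.
Qed.

Lemma qpath_jpath w a b : loop_path mul' g' (pi a) w (pi b) -> jpath a w b.
Proof.
elim: w a => [|y w IH] a /=.
- by move=> e; apply: (@jpath_from_pi b) => //; exact: jp_nil.
- case=> c' [e h]; case: y e => x /= e.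
  + apply: (@jp_edge _ _ (one_mul mul a (g x))) => //.
    by apply: IH; rewrite pi_one_mul -e.
  + case: (pi_surj c') => c ec; subst c'.
    apply: (@jpath_from_pi (one_mul mul c (g x))); first by rewrite pi_one_mul -e.
    by apply: (@jp_edge _ _ c) => //; apply: IH.
Qed.

Lemma jpath_qpath a w b : jpath a w b -> loop_path mul' g' (pi a) w (pi b).
Proof.
elim=> [a0|a0 y c w0 b0 e _ IH|t t' w0 b0 ht ht' _ IH] /=.
- by [].
- by exists (pi c); split => //; apply: edge_pi.
- move: IH => /=; by rewrite (proj2 (rees_proj_None t) ht) (proj2 (rees_proj_None t') ht').
Qed.

Lemma jpath_cat a u c v b : jpath a u c -> jpath c v b -> jpath a (u ++ v) b.
Proof.
elim=> [//|a0 y c0 w0 b0 e _ IH|t t' w0 b0 ht ht' _ IH] hv.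
- by apply: jp_edge e (IH hv).
- by apply: jp_jump ht ht' (IH hv).
Qed.

Lemma path_jpath a w b : loop_path mul g a w b -> jpath a w b.
Proof.
elim: w a => [|y w IH] a /=; first by move=> ->; exact: jp_nil.
by case=> c [e h]; apply: jp_edge e (IH _ h).
Qed.

Definition MTT : lang (X + X) :=
  fun w => exists t t', T t /\ T t' /\ loop_path mul g (Some t) w (Some t').

Lemma star_jpath w : lang_star MTT w -> forall t t', T t -> T t' -> jpath (Some t) w (Some t').
Proof.
elim=> [|u v [t1 [t2 [h1 [h2 hu]]]] _ IH] t t' ht ht'.
- by apply: jp_jump ht ht' _; exact: jp_nil.
- apply: jpath_cat (IH t2 t' h2 ht').
  by apply: jp_jump ht h1 _; apply: path_jpath.
Qed.

Definition jchar a w b : Prop :=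
  loop_path mul g a w b \/
  exists w1 w2 w3, w = w1 ++ w2 ++ w3 /\ (exists t, T t /\ loop_path mul g a w1 (Some t)) /\
     lang_star MTT w2 /\ (exists t, T t /\ loop_path mul g (Some t) w3 b).

Lemma jpathP a w b : jpath a w b <-> jchar a w b.
Proof.
split.
- elim=> [a0|a0 y c w0 b0 e _ IH|t t' w0 b0 ht ht' _ IH].
  + by left.
  + case: IH => [h|[w1 [w2 [w3 [-> [[t [ht h1]] [h2 h3]]]]]]].
    * by left; exists c.
    * right; exists (y :: w1), w2, w3; split => //; split => //.
      by exists t; split => //; exists c.
  + case: IH => [h|[w1 [w2 [w3 [-> [[t1 [ht1 h1]] [h2 h3]]]]]]].
    * right; exists [::], [::], w0; split => //; split; first by exists t.
      by split; [exact: star_nil | exists t'].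
    * right; exists [::], (w1 ++ w2), w3; rewrite catA; split => //; split; first by exists t.
      split => //; apply: star_cons h2; by exists t', t1.
- case=> [/path_jpath //|[w1 [w2 [w3 [-> [[t [ht h1]] [h2 [t3 [ht3 h3]]]]]]]]].
  apply: jpath_cat (path_jpath h1) _.
  apply: jpath_cat (star_jpath h2 ht ht3) (path_jpath h3).
Qed.

Variable R : X -> seq X -> Prop.
Hypothesis HR1 : forall x v, R x v -> T (eval_word mul g x v).
Hypothesis HR2 : forall t, T t -> exists x v, R x v /\ eval_word mul g x v = t.

Definition Kin : lang (X + X) := fun w => exists x v, w = map inl (x :: v) /\ R x v.
Definition Kbar : lang (X + X) := fun w => exists x v, w = bar (map inl (x :: v)) /\ R x v.

Lemma rdivP w : lang_rdiv L Kbar w <-> exists t, T t /\ loop_path mul g None w (Some t).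
Proof.
split.
- case=> k [[x [v [-> hR]]] /path_cat [c [h1 h2]]].
  move: h2; rewrite -path_bar => /path_inl_none e; subst c.
  by exists (eval_word mul g x v); split => //; apply: HR1.
- case=> t [ht h]; case: (HR2 ht) => x [v [hR e]].
  exists (bar (map inl (x :: v))); split; first by exists x, v.
  apply/path_cat; exists (Some t); split => //.
  by rewrite -path_bar; apply/path_inl_none; rewrite e.
Qed.

Lemma ldivP w : lang_ldiv Kin L w <-> exists t, T t /\ loop_path mul g (Some t) w None.
Proof.
split.
- case=> k [[x [v [-> hR]]] /path_cat [c [/path_inl_none e h2]]]; subst c.
  by exists (eval_word mul g x v); split => //; apply: HR1.
- case=> t [ht h]; case: (HR2 ht) => x [v [hR e]].
  exists (map inl (x :: v)); split; first by exists x, v.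
  by apply/path_cat; exists (Some t); split => //; apply/path_inl_none; rewrite e.
Qed.

Lemma ldiv_rdivP w : lang_ldiv Kin (lang_rdiv L Kbar) w <-> MTT w.
Proof.
split.
- case=> k [[x [v [-> hR]]] /rdivP [t' [ht' /path_cat [c [/path_inl_none e h2]]]]]; subst c.
  by exists (eval_word mul g x v), t'; split => //; apply: HR1.
- case=> t [t' [ht [ht' h]]]; case: (HR2 ht) => x [v [hR e]].
  exists (map inl (x :: v)); split; first by exists x, v.
  apply/rdivP; exists t'; split => //.
  by apply/path_cat; exists (Some t); split => //; apply/path_inl_none; rewrite e.
Qed.

Lemma core w :
  loop_problem mul' g' w <->
  lang_union L (lang_cat (lang_rdiv L Kbar)
     (lang_cat (lang_star (lang_ldiv Kin (lang_rdiv L Kbar))) (lang_ldiv Kin L))) w.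
Proof.
rewrite /loop_problem; split.
- move=> h; have /jpathP : jpath None w None by apply: (qpath_jpath (a:=None) (b:=None)).
  case=> [h1|[w1 [w2 [w3 [-> [h1 [h2 h3]]]]]]]; first by left.
  right; exists w1, (w2 ++ w3); split => //; split; first exact/rdivP.
  exists w2, w3; split => //; split; last exact/ldivP.
  by apply: star_mono h2 => u /ldiv_rdivP.
- move=> h; apply: (jpath_qpath (a:=None) (b:=None)); apply/jpathP.
  case: h => [h|[w1 [w23 [-> [/rdivP h1 [w2 [w3 [-> [h2 /ldivP h3]]]]]]]]]; first by left.
  right; exists w1, w2, w3; split => //; split => //; split => //.
  by apply: star_mono h2 => u /ldiv_rdivP.
Qed.

End Rees.

Lemma closure_step (F : lang_family) (P : forall A : finType, lang A -> Prop)
  (X : finType) (L K1 K2 : lang (X + X)) :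
  closed_rat_ops F -> closed_div P F -> F _ L -> P _ K1 -> P _ K2 ->
  F _ (lang_union L (lang_cat (lang_rdiv L K2)
     (lang_cat (lang_star (lang_ldiv K1 (lang_rdiv L K2))) (lang_ldiv K1 L)))).
Proof.
move=> HF Hd HL P1 P2.
have HA := proj1 (Hd _ _ _ P2 HL).
have HC := proj2 (Hd _ _ _ P1 HL).
have HB := proj2 (Hd _ _ _ P1 HA).
apply: (proj1 (proj2 (HF _))) => //; apply: (proj1 (HF _)) => //.
by apply: (proj1 (HF _)) => //; apply: (proj2 (proj2 (HF _))).
Qed.

Lemma regular_ext (A : Type) (K1 K2 : lang A) : (forall w, K1 w <-> K2 w) -> regular K1 -> regular K2.
Proof. by move=> H [r Hr]; exists r => w; rewrite -H. Qed.

Lemma lang_eq (A : Type) (K1 K2 : lang A) : (forall w, K1 w <-> K2 w) -> K1 = K2.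
Proof. by move=> H; apply: functional_extensionality => w; apply: propositional_extensionality. Qed.

Theorem proposition3p1 (S : Type) (mul : S -> S -> S) (mulA : associative mul)
  (X : finType) (g : X -> S) (gen : is_generating mul g) :
  (forall F : lang_family,
      closed_rat_ops F -> closed_div (@finite_lang) F ->
      F _ (loop_problem mul g) ->
      forall T : S -> Prop, is_ideal mul T -> finite_subset T ->
      F _ (loop_problem (rees_mul mul (T:=T)) (rees_gen T g)))
  /\
  (forall F : lang_family,
      closed_rat_ops F -> closed_div (@regular) F ->
      F _ (loop_problem mul g) ->
      forall T : S -> Prop, is_ideal mul T -> rational_subset mul T ->
      F _ (loop_problem (rees_mul mul (T:=T)) (rees_gen T g))).
Proof.
split.
- move=> F HF Hd HL T idT [l Hl].
  have [reps [Hr1 Hr2]] : exists reps : seq (X * seq X),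
      (forall p, List.In p reps -> T (eval_word mul g p.1 p.2)) /\
      (forall t, T t -> exists p, List.In p reps /\ eval_word mul g p.1 p.2 = t).
    suff H : forall l0, (forall s, List.In s l0 -> T s) -> exists reps : seq (X * seq X),
      (forall p, List.In p reps -> T (eval_word mul g p.1 p.2)) /\
      (forall t, List.In t l0 -> exists p, List.In p reps /\ eval_word mul g p.1 p.2 = t).
      case: (H l) => [s /Hl //|reps [H1 H2]]; exists reps; split => // t /Hl; exact: H2.
    elim=> [|s l0 IH] Hs; first by exists [::].
    case: IH => [t ht|reps [H1 H2]]; first by apply: Hs; right.
    case: (gen s) => x [w e].
    exists ((x, w) :: reps); split.
    + by move=> p [<- /=|hp]; [rewrite e; apply: Hs; left|exact: H1].
    + move=> t [<-|ht]; first by exists (x, w); split => //; left.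
      by case: (H2 _ ht) => p [hp ep]; exists p; split => //; right.
  pose R := fun x v => List.In (x, v) reps.
  have HR1 : forall x v, R x v -> T (eval_word mul g x v) by move=> x v /Hr1.
  have HR2 : forall t, T t -> exists x v, R x v /\ eval_word mul g x v = t.
    by move=> t /Hr2 [[x v] [h e]]; exists x, v.
  rewrite (lang_eq (core idT HR1 HR2)).
  apply: closure_step HF Hd HL _ _.
  + exists (List.map (fun p => map inl (p.1 :: p.2)) reps) => w; rewrite List.in_map_iff.
    split; first by case=> x [v [-> h]]; exists (x, v).
    by case=> [[x v] [<- h]]; exists x, v.
  + exists (List.map (fun p => bar (map inl (p.1 :: p.2))) reps) => w; rewrite List.in_map_iff.
    split; first by case=> x [v [-> h]]; exists (x, v).
    by case=> [[x v] [<- h]]; exists x, v.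
- move=> F HF Hd HL T idT [Y [f [K [Kreg HT]]]].
  have hex : forall y, exists p : X * seq X, eval_word mul g p.1 p.2 = f y.
    by move=> y; case: (gen (f y)) => x [w e]; exists (x, w).
  pose hh := fun y => proj1_sig (constructive_indefinite_description _ (hex y)).
  have hhP : forall y, eval_word mul g (hh y).1 (hh y).2 = f y by move=> y; exact: (proj2_sig (constructive_indefinite_description _ (hex y))).
  pose h := fun y => (hh y).1 :: (hh y).2.
  pose R := fun x v => exists u, (K u /\ u <> [::]) /\ x :: v = flatten (map h u).
  have flat_eval : forall w y x v, x :: v = flatten (map h (y :: w)) ->
      eval_word mul g x v = eval_word mul f y w.
    elim=> [|y' w IH] y x v.
    + by rewrite /= cats0 /h => [[-> ->]]; apply: hhP.
    + have IH' := IH y' (hh y').1 ((hh y').2 ++ flatten (map h w)) erefl.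
      rewrite /= /h /= => [[-> ->]].
      rewrite eval_cat // hhP; move: IH'; rewrite /h => ->.
      by rewrite /eval_word /= foldl_mul.
  have HR1 : forall x v, R x v -> T (eval_word mul g x v).
    move=> x v [[|y w] [[Ku nu] e]] //.
    by rewrite (flat_eval _ _ _ _ e); apply/HT; exists y, w.
  have HR2 : forall t, T t -> exists x v, R x v /\ eval_word mul g x v = t.
    move=> t /HT [y [w [Kyw <-]]].
    exists (hh y).1, ((hh y).2 ++ flatten (map h w)); split; last exact: flat_eval.
    by exists (y :: w).
  have key : forall (Z : Type) (i : X -> Z) z,
      (exists x v, z = map i (x :: v) /\ R x v) <->
      exists u, (K u /\ u <> [::]) /\ z = flatten (map (fun y => map i (h y)) u).
    move=> Z i z.
    have km : forall u, map i (flatten (map h u)) = flatten (map (fun y => map i (h y)) u).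
      by elim=> //= y u <-; rewrite map_cat.
    split.
    + by case=> x [v [-> [u [Ku e]]]]; exists u; rewrite -km -e.
    + case=> [[|y w] [[Ku nu] ->]] //.
      exists (hh y).1, ((hh y).2 ++ flatten (map h w)); split; first by rewrite -km.
      by exists (y :: w).
  rewrite (lang_eq (core idT HR1 HR2)).
  apply: closure_step HF Hd HL _ _.
  + apply: regular_ext (regular_subst (fun y => map inl (h y)) (regular_ne Kreg)) => w.
    exact: (iff_sym (key _ inl w)).
  + apply: regular_ext (regular_rev (regular_subst (fun y => map inr (h y)) (regular_ne Kreg))) => w.
    apply: iff_trans (iff_sym (key _ inr (rev w))) _; split.
    * by case=> x [v [e hR]]; exists x, v; split => //; rewrite bar_inl -e revK.
    * by case=> x [v [e hR]]; exists x, v; split => //; rewrite e bar_inl revK.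
Qed.
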